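(* Let $d<0<r<u$ be real numbers with $(1+u)(1+d)=1$, let $S_0>0$, let $T\ge 1$ be an integer, and set $q=\frac{r-d}{u-d}\in(0,1)$. Let $\mathcal{S}=\{S_0(1+u)^k(1+d)^l : k,l\in\{0,1,2,\dots\}\}=\{S_0(1+u)^j: j\in\mathbb{Z}\}$ be the (extended, infinite) state space. Let $f:\mathcal{S}\to\mathbb{R}$ be the payoff of a European-style derivative with maturity $T$, and assume that either $\sum_{K\in\mathcal{S}}|f(K)|<\infty$ or $f\ge 0$. Define the discounted value process of the replication strategy by $$V_f(s,T)=f(s),\qquad V_f(s,t)=q\,V_f\big(s(1+u),t+1\big)+(1-q)\,V_f\big(s(1+d),t+1\big)\quad (s\in\mathcal{S},\ 0\le t<T),$$ equivalently $V_f(s,t)=\sum_{x=0}^{T-t}\binom{T-t}{x}q^x(1-q)^{T-t-x}f\big(s(1+u)^x(1+d)^{T-t-x}\big)$. Then for every $t\in\{0,1,\dots,T\}$, $$\sum_{s\in\mathcal{S}}V_f(s,t)=\sum_{K\in\mathcal{S}}f(K).$$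
   Context: This is the Cox–Ross–Rubinstein binomial model with constant one-period risk-free rate $r$ and up/down returns $u,d$, but with the state space extended to all points $S_0(1+u)^j$, $j\in\mathbb{Z}$, at every time. All values are expressed in numeraire (discounted) units: a payoff of one unit at time $T$ and the amount of wealth needed at time $t$ to replicate it are measured in the time-$T$ and time-$t$ numeraire respectively, so that one-period replication costs of a unit payoff contingent on an up-move (resp. down-move) are $q$ (resp. $1-q$). $V_f(s,t)$ is the (numeraire-denominated) wealth required at time $t$ in state $s$ to replicate the payoff $f(S_T)$ at time $T$; when $f\ge0$ the sums may be $+\infty$. *)

(* Defs.v *)
From mathcomp Require Import all_boot all_order all_algebra.
From mathcomp Require Import all_classical all_reals all_analysis.
Set Implicit Arguments. Unset Strict Implicit. Unset Printing Implicit Defensive.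
Import Order.TTheory GRing.Theory Num.Theory.
Local Open Scope classical_set_scope.
Local Open Scope ring_scope.

Definition state_space (R : realType) (S0 u d : R) : set R :=
  [set S0 * (1 + u) ^+ k * (1 + d) ^+ l | k in [set: nat] & l in [set: nat]].

Fixpoint value_togo (R : realType) (q u d : R) (f : R -> R) (n : nat) (s : R) : R :=
  match n with
  | 0 => f s
  | n'.+1 => q * value_togo q u d f n' (s * (1 + u))
             + (1 - q) * value_togo q u d f n' (s * (1 + d))
  end.

Definition Vf (R : realType) (q u d : R) (f : R -> R) (T : nat) (s : R) (t : nat) : R :=
  value_togo q u d f (T - t) s.

(* For g >= 0 this is the
   (possibly infinite) sum \esum g; for absolutely summable g it is the usual sum. *)
Definition ssum (R : realType) (D : set R) (g : R -> R) : \bar R :=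
  (\esum_(x in D) (Num.max (g x) 0)%:E - \esum_(x in D) (Num.max (- g x) 0)%:E)%E.

(* Main.v *)
Require Import Defs.
From mathcomp Require Import all_boot all_order all_algebra.
From mathcomp Require Import all_classical all_reals all_analysis.
From mathcomp Require Import ring lra.
Import Order.TTheory GRing.Theory Num.Theory.
Local Open Scope classical_set_scope.
Local Open Scope ring_scope.

Section Aux.
Variable R : realType.

Lemma esumZ (D : set R) (c : R) (g : R -> R) : 0 <= c ->
  (\esum_(x in D) (c * g x)%:E = c%:E * \esum_(x in D) (g x)%:E)%E.
Proof.
move=> c0; rewrite /esum -ereal_supZl //; last first.
  apply/set0P; exists 0%E; exists set0; first exact: fsets_set0.
  by rewrite fsbig_set0.
congr ereal_sup; apply/seteqP; split => y.
- move=> [A [finA AD] <-].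
  exists (\sum_(x \in A) (g x)%:E)%E; first by exists A.
  by rewrite !fsumEFin // -EFinM (fsbig_distrr _ _ _ finA).
- move=> [_ [A [finA AD] <-] <-].
  exists A => //; rewrite !fsumEFin // -EFinM (fsbig_distrr _ _ _ finA) //.
Qed.

End Aux.

Section Shift.
Variables (R : realType) (S0 u d : R).
Hypothesis ab : (1 + u) * (1 + d) = 1.
Local Notation D := (state_space S0 u d).

Lemma ssU x : D x -> D (x * (1 + u)).
Proof.
move=> [k _ [l _ <-]]; exists k.+1 => //; exists l => //.
by rewrite exprS; ring.
Qed.

Lemma ssD x : D x -> D (x * (1 + d)).
Proof.
move=> [k _ [l _ <-]]; exists k => //; exists l.+1 => //.
by rewrite exprS; ring.
Qed.

Lemma imgU : (fun x => x * (1 + u)) @` D = D.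
Proof.
apply/seteqP; split => y.
- by move=> [x Dx <-]; exact: ssU.
- move=> Dy; exists (y * (1 + d)); first exact: ssD.
  by rewrite -mulrA (mulrC (1 + d)) ab mulr1.
Qed.

Lemma imgD : (fun x => x * (1 + d)) @` D = D.
Proof.
apply/seteqP; split => y.
- by move=> [x Dx <-]; exact: ssD.
- move=> Dy; exists (y * (1 + u)); first exact: ssU.
  by rewrite -mulrA ab mulr1.
Qed.

Lemma esum_shiftU (g : R -> \bar R) :
  (\esum_(x in D) g (x * (1 + u))%R = \esum_(x in D) g x)%E.
Proof.
rewrite -(esum_image D (fun x => x * (1 + u)) g) ?imgU //.
move=> x y _ _ /= /(congr1 (fun z => z * (1 + d))).
by rewrite -!mulrA ab !mulr1.
Qed.

Lemma esum_shiftD (g : R -> \bar R) :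
  (\esum_(x in D) g (x * (1 + d))%R = \esum_(x in D) g x)%E.
Proof.
rewrite -(esum_image D (fun x => x * (1 + d)) g) ?imgD //.
move=> x y _ _ /= /(congr1 (fun z => z * (1 + u))).
by rewrite -!mulrA [(1 + d) * _]mulrC ab !mulr1.
Qed.

End Shift.

Section Value.
Variables (R : realType) (S0 u d q : R).
Hypothesis ab : (1 + u) * (1 + d) = 1.
Hypothesis q0 : 0 <= q.
Hypothesis q1 : q <= 1.
Local Notation D := (state_space S0 u d).

Lemma vt_ge0 (g : R -> R) : (forall x, 0 <= g x) ->
  forall n x, 0 <= value_togo q u d g n x.
Proof.
move=> g0; elim=> [|n IH] x /=; first exact: g0.
by rewrite addr_ge0 // mulr_ge0 // ?IH // subr_ge0.
Qed.

Lemma vt_lin (g h : R -> R) n x :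
  value_togo q u d (fun y => g y - h y) n x =
  value_togo q u d g n x - value_togo q u d h n x.
Proof.
elim: n x => [|n IH] x //=; rewrite !IH; ring.
Qed.

Lemma vt_esum (g : R -> R) : (forall x, 0 <= g x) -> forall n,
  (\esum_(x in D) (value_togo q u d g n x)%:E = \esum_(x in D) (g x)%:E)%E.
Proof.
move=> g0; elim=> [|n IH] //=.
have h0 x : 0 <= value_togo q u d g n x by apply: vt_ge0.
under eq_esum do rewrite EFinD.
rewrite esumD; last 2 first.
- by move=> x _; rewrite lee_fin mulr_ge0.
- by move=> x _; rewrite lee_fin mulr_ge0 // subr_ge0.
rewrite !esumZ ?subr_ge0 //.
rewrite (@esum_shiftU _ S0 _ _ ab (fun x => (value_togo q u d g n x)%:E)).
rewrite (@esum_shiftD _ S0 _ _ ab (fun x => (value_togo q u d g n x)%:E)).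
rewrite IH -ge0_muleDl ?lee_fin ?subr_ge0 // -EFinD addrC subrK mul1e //.
Qed.

End Value.

Lemma ssum_diff (R : realType) (D : set R) (A B : R -> R) :
  (forall x, 0 <= A x) -> (forall x, 0 <= B x) ->
  (\esum_(x in D) (B x)%:E < +oo)%E ->
  ssum D (fun x => A x - B x) =
  (\esum_(x in D) (A x)%:E - \esum_(x in D) (B x)%:E)%E.
Proof.
move=> A0 B0 Bfin; rewrite /ssum.
set eP := (\esum_(x in D) _)%E.
set eN := (\esum_(x in D) (Num.max (- (A x - B x)) 0)%:E)%E.
set eA := (\esum_(x in D) (A x)%:E)%E.
set eB := (\esum_(x in D) (B x)%:E)%E.
have {}Bfin : (eB < +oo)%E by [].
have eq1 : (eP + eB = eN + eA)%E.
  rewrite /eP /eB /eN /eA -!esumD; last 4 first.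
  - by move=> x _; rewrite lee_fin le_max lexx orbT.
  - by move=> x _; rewrite lee_fin.
  - by move=> x _; rewrite lee_fin le_max lexx orbT.
  - by move=> x _; rewrite lee_fin.
  apply: eq_esum => x _; rewrite -!EFinD; congr EFin.
  have := A0 x; have := B0 x.
  case: (leP (A x - B x) 0); case: (leP (- (A x - B x)) 0); lra.
have NB : (eN <= eB)%E.
  apply: le_esum => x _; rewrite lee_fin ge_max B0 andbT; have := A0 x; lra.
have eB0 : (0 <= eB)%E by apply: esum_ge0 => x _; rewrite lee_fin.
have eN0 : (0 <= eN)%E by apply: esum_ge0 => x _; rewrite lee_fin le_max lexx orbT.
have eA0 : (0 <= eA)%E by apply: esum_ge0 => x _; rewrite lee_fin.
have eP0 : (0 <= eP)%E by apply: esum_ge0 => x _; rewrite lee_fin le_max lexx orbT.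
have eNfin : (eN < +oo)%E by apply: le_lt_trans Bfin.
clear NB; move: eq1 eB0 eN0 eA0 eP0 eNfin Bfin.
case: eP => [p| |]; case: eN => [n| |]; case: eA => [a| |]; case: eB => [b| |] //=;
  rewrite ?lee_fin ?ltry ?ltey //.
- move=> /eqP; rewrite -!EFinD eqe => /eqP h *; congr EFin; lra.
Qed.

Theorem proposition1 (R : realType) (d r u S0 : R) (T : nat) (f : R -> R) :
  d < 0 -> 0 < r -> r < u -> (1 + u) * (1 + d) = 1 -> 0 < S0 -> (1 <= T)%N ->
  (summable (state_space S0 u d) (fun K => (f K)%:E)
   \/ (forall K, state_space S0 u d K -> 0 <= f K)) ->
  let q := (r - d) / (u - d) in
  forall t : nat, (t <= T)%N ->
    ssum (state_space S0 u d) (fun s => Vf q u d f T s t)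
    = ssum (state_space S0 u d) f.
Proof.
move=> d0 r0 ru ab S00 T1 hf q t tT.
have ud : 0 < u - d by lra.
have q0 : 0 <= q by rewrite /q divr_ge0 // ?ltW //; lra.
have q1 : q <= 1 by rewrite /q ler_pdivrMr // mul1r; lra.
set pos := fun x => Num.max (f x) 0.
set neg := fun x => Num.max (- f x) 0.
have pos0 x : 0 <= pos x by rewrite /pos le_max lexx orbT.
have neg0 x : 0 <= neg x by rewrite /neg le_max lexx orbT.
have Veq : (fun s => Vf q u d f T s t) =
  (fun s => value_togo q u d pos (T - t) s - value_togo q u d neg (T - t) s).
  apply/funext => s; rewrite /Vf -vt_lin; congr value_togo.
  apply/funext => y; rewrite /pos /neg.
  case: (leP (f y) 0); case: (leP (- f y) 0); lra.
have negfin : (\esum_(x in state_space S0 u d) (neg x)%:E < +oo)%E.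
  case: hf => [hs|hp].
  - apply: le_lt_trans hs; apply: le_esum => x _.
    rewrite abse_EFin lee_fin /neg ge_max normr_ge0 andbT.
    by rewrite -normrN ler_norm.
  - rewrite esum1 ?ltry // => x Dx; congr EFin; rewrite /neg.
    by apply/max_idPr; have := hp x Dx; lra.
rewrite Veq ssum_diff //; last 3 first.
- by move=> x; apply: vt_ge0.
- by move=> x; apply: vt_ge0.
- by rewrite (@vt_esum _ S0 _ _ _ ab q0 q1).
by rewrite !(@vt_esum _ S0 _ _ _ ab q0 q1).
Qed.
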